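(* Let $K$ be a field which is finite-dimensional over its center $Z(K)$. Let $L/K$ be a field extension such that $K$ is existentially closed in $L$ and $Z(K)\subset Z(L)$. Then $L/K$ is a regular extension.
   Context: ''Field'' means a not necessarily commutative division ring; $Z(A)$ denotes the center of a ring $A$. $K$ is existentially closed in $L$ if every existential first-order sentence in the language of rings with constants from $K$ which holds in $L$ also holds in $K$. For a field extension $L/K$ and $x\in L$, $K(x)$ is the subfield of $L$ generated by $K$ and $x$; $x$ is algebraic over $K$ if $K(x)$ is finite-dimensional both as a left and as a right $K$-vector space. $L/K$ is regular if every element of $L$ algebraic over $K$ lies in $K$. *)

(* Defs.v *)
From HB Require Import structures.
From mathcomp Require Import all_boot all_algebra.
Set Implicit Arguments. Unset Strict Implicit. Unset Printing Implicit Defensive.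
Import GRing.Theory.
Local Open Scope ring_scope.

(* "Field" = (not necessarily commutative) division ring. *)
Definition is_divring (R : unitRingType) : Prop :=
  forall x : R, x != 0 -> x \is a GRing.unit.

Definition central (R : ringType) (z : R) : Prop := forall x : R, z * x = x * z.

Definition findim_over_center (K : ringType) : Prop :=
  exists s : seq K, forall x : K, exists c : seq K,
    size c = size s /\ (forall i, central c`_i) /\
    x = \sum_(i < size s) c`_i * s`_i.

Inductive rterm (R : Type) : Type :=
| RVar of nat
| RConst of R
| RAdd of rterm R & rterm R
| ROpp of rterm R
| RMul of rterm R & rterm R.

(* Existential formulas (positive combinations of atomic and negated atomic
   formulas, with existential quantifiers). *)
Inductive eform (R : Type) : Type :=
| ETrue
| EFalse
| EEq of rterm R & rterm R
| ENeq of rterm R & rterm R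
| EAnd of eform R & eform R
| EOr of eform R & eform R
| EEx of nat & eform R.

Fixpoint reval (R : ringType) (e : nat -> R) (t : rterm R) : R :=
  match t with
  | RVar i => e i
  | RConst c => c
  | RAdd t1 t2 => reval e t1 + reval e t2
  | ROpp t1 => - reval e t1
  | RMul t1 t2 => reval e t1 * reval e t2
  end.

Definition upd (R : Type) (e : nat -> R) (i : nat) (x : R) : nat -> R :=
  fun j => if j == i then x else e j.

Fixpoint eholds (R : ringType) (e : nat -> R) (f : eform R) : Prop :=
  match f with
  | ETrue => True
  | EFalse => False
  | EEq t1 t2 => reval e t1 = reval e t2
  | ENeq t1 t2 => reval e t1 <> reval e t2
  | EAnd f1 f2 => eholds e f1 /\ eholds e f2
  | EOr f1 f2 => eholds e f1 \/ eholds e f2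
  | EEx i f1 => exists x : R, eholds (upd e i x) f1
  end.

Fixpoint rterm_map (A B : Type) (g : A -> B) (t : rterm A) : rterm B :=
  match t with
  | RVar i => RVar B i
  | RConst c => RConst (g c)
  | RAdd t1 t2 => RAdd (rterm_map g t1) (rterm_map g t2)
  | ROpp t1 => ROpp (rterm_map g t1)
  | RMul t1 t2 => RMul (rterm_map g t1) (rterm_map g t2)
  end.

Fixpoint eform_map (A B : Type) (g : A -> B) (f : eform A) : eform B :=
  match f with
  | ETrue => ETrue B
  | EFalse => EFalse B
  | EEq t1 t2 => EEq (rterm_map g t1) (rterm_map g t2)
  | ENeq t1 t2 => ENeq (rterm_map g t1) (rterm_map g t2)
  | EAnd f1 f2 => EAnd (eform_map g f1) (eform_map g f2)
  | EOr f1 f2 => EOr (eform_map g f1) (eform_map g f2)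
  | EEx i f1 => EEx i (eform_map g f1)
  end.

(* Sentences: free variables play no role; we evaluate in the environment
   sending every variable to 0 (a sentence has no free variables). *)
Definition ex_closed (K L : ringType) (f : {rmorphism K -> L}) : Prop :=
  forall phi : eform K,
    eholds (fun _ => 0 : L) (eform_map f phi) -> eholds (fun _ => 0 : K) phi.

Definition center_incl (K L : ringType) (f : {rmorphism K -> L}) : Prop :=
  forall z : K, central z -> central (f z).

Definition divsubring_closed (L : unitRingType) (S : L -> Prop) : Prop :=
  [/\ S 0, S 1, (forall a b, S a -> S b -> S (a - b)),
      (forall a b, S a -> S b -> S (a * b)) & (forall a, S a -> S a^-1)].

Definition adjoin (K L : unitRingType) (f : {rmorphism K -> L}) (x : L) (y : L)
  : Prop :=
  forall S : L -> Prop, divsubring_closed S -> (forall k, S (f k)) -> S x -> S y.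

Definition left_findim (K L : unitRingType) (f : {rmorphism K -> L}) (x : L) :=
  exists s : seq L, (forall i, (i < size s)%N -> adjoin f x s`_i) /\
    forall y, adjoin f x y -> exists c : seq K,
      size c = size s /\ y = \sum_(i < size s) f c`_i * s`_i.

Definition right_findim (K L : unitRingType) (f : {rmorphism K -> L}) (x : L) :=
  exists s : seq L, (forall i, (i < size s)%N -> adjoin f x s`_i) /\
    forall y, adjoin f x y -> exists c : seq K,
      size c = size s /\ y = \sum_(i < size s) s`_i * f c`_i.

Definition algebraic_over (K L : unitRingType) (f : {rmorphism K -> L}) (x : L) :=
  left_findim f x /\ right_findim f x.

Definition regular_ext (K L : unitRingType) (f : {rmorphism K -> L}) : Prop :=
  forall x : L, algebraic_over f x -> exists k : K, x = f k.

(* Main.v *)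
From HB Require Import structures.
Require Import Defs.
From mathcomp Require Import all_boot all_algebra.
From Stdlib Require Import ClassicalEpsilon Classical FunctionalExtensionality.
Set Implicit Arguments. Unset Strict Implicit. Unset Printing Implicit Defensive.
Import GRing.Theory.
Local Open Scope ring_scope.

Lemma choice_fun (A B : Type) (P : A -> B -> Prop) :
  (forall a, exists b, P a b) -> exists g : A -> B, forall a, P a (g a).
Proof.
move=> H; exists (fun a => proj1_sig (constructive_indefinite_description _ (H a))).
by move=> a; case: (constructive_indefinite_description _ (H a)).
Qed.

Section Forms.
Variable R : nzRingType.

Definition ebig (l : seq nat) (F : nat -> eform R) :=
  foldr (fun i acc => EAnd (F i) acc) (ETrue R) l.
Definition tsum (l : seq nat) (F : nat -> rterm R) :=
  foldr (fun i acc => RAdd (F i) acc) (RConst 0) l.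

Lemma eholds_ebig e l F :
  eholds e (ebig l F) <-> (forall i, i \in l -> eholds e (F i)).
Proof.
elim: l => [|a l IH] /=; first by split=> // _ i; rewrite in_nil.
rewrite IH; split.
  by case=> Ha Hl i; rewrite in_cons => /orP [/eqP -> | /Hl].
move=> H; split; first by apply: H; rewrite mem_head.
by move=> i Hi; apply: H; rewrite in_cons Hi orbT.
Qed.

Lemma reval_tsum e l F : reval e (tsum l F) = \sum_(i <- l) reval e (F i).
Proof. by elim: l => [|a l IH] /=; rewrite ?big_nil ?big_cons ?IH. Qed.

Fixpoint exs (n : nat) (phi : eform R) : eform R :=
  match n with 0 => phi | k.+1 => EEx k (exs k phi) end.

Lemma eholds_exs e n phi :
  eholds e (exs n phi) <->
  exists g : nat -> R, eholds (fun j => if (j < n)%N then g j else e j) phi.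
Proof.
elim: n e => [|n IH] e /=.
  have -> : (fun j => if (j < 0)%N then (fun _ => 0 : R) j else e j) = e.
    by apply: functional_extensionality => j.
  split; first by move=> H; exists (fun _ => 0).
  move=> [g Hg]; suff <- : (fun j => if (j < 0)%N then g j else e j) = e by [].
  by apply: functional_extensionality => j.
split.
  move=> [x /IH [g Hg]]; exists (fun j => if (j < n)%N then g j else x).
  suff <- : (fun j => if (j < n)%N then g j else upd e n x j) =
     (fun j => if (j < n.+1)%N then (if (j < n)%N then g j else x) else e j) by [].
  apply: functional_extensionality => j; rewrite /upd.
  case: (ltngtP j n) => Hj.
  - by rewrite ltnS ltnW.
  - by rewrite ltnS leqNgt Hj.
  - by rewrite Hj ltnSn.
move=> [g Hg]; exists (g n); apply/IH; exists g.
suff -> : (fun j => if (j < n)%N then g j else upd e n (g n) j) =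
     (fun j => if (j < n.+1)%N then g j else e j) by [].
apply: functional_extensionality => j; rewrite /upd.
case: (ltngtP j n) => Hj.
- by rewrite ltnS ltnW.
- by rewrite ltnS leqNgt Hj.
- by rewrite Hj ltnSn.
Qed.

Definition body (n m : nat) (a b : nat -> nat -> nat -> R) (e o : nat -> R) :=
  EAnd (ebig (iota 0 n) (fun i => ebig (iota 0 n) (fun j =>
          EEq (RMul (RVar R i) (RVar R j))
              (tsum (iota 0 n) (fun k => RMul (RConst (a i j k)) (RVar R k))))))
  (EAnd (ebig (iota 0 n) (fun i => ebig (iota 0 m) (fun l =>
          EEq (RMul (RVar R i) (RConst (e l)))
              (tsum (iota 0 n) (fun k => RMul (RConst (b i l k)) (RVar R k))))))
        (EEq (RConst 1) (tsum (iota 0 n) (fun k => RMul (RConst (o k)) (RVar R k))))).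

Lemma eholds_body n m a b e o (g : nat -> R) env :
  (forall i, (i < n)%N -> env i = g i) ->
  eholds env (body n m a b e o) <->
  [/\ forall i j, (i < n)%N -> (j < n)%N ->
        g i * g j = \sum_(k < n) a i j k * g k,
      forall i l, (i < n)%N -> (l < m)%N ->
        g i * e l = \sum_(k < n) b i l k * g k &
      1 = \sum_(k < n) o k * g k].
Proof.
move=> Henv.
have Hs : forall c : nat -> R,
    reval env (tsum (iota 0 n) (fun k => RMul (RConst (c k)) (RVar R k))) =
    \sum_(k < n) c k * g k.
  move=> c; rewrite reval_tsum /= -(subn0 n) -/(index_iota 0 n) big_mkord subn0.
  by apply: eq_bigr => k _; rewrite Henv.
rewrite /body /= !eholds_ebig Hs; split.
  case=> [H1 [H2 H3]]; split => //.
    move=> i j Hi Hj; have := H1 i; rewrite mem_iota add0n => /(_ Hi).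
    by move/eholds_ebig => /(_ j); rewrite mem_iota add0n Hj => /(_ isT) /=; rewrite Hs !Henv.
  move=> i l Hi Hl; have := H2 i; rewrite mem_iota add0n => /(_ Hi).
  by move/eholds_ebig => /(_ l); rewrite mem_iota add0n Hl => /(_ isT) /=; rewrite Hs !Henv.
case=> H1 H2 H3; split; [|split] => //.
  move=> i; rewrite mem_iota add0n => Hi; apply/eholds_ebig => j.
  rewrite mem_iota add0n /= => Hj; rewrite Hs !Henv //; exact: H1.
move=> i; rewrite mem_iota add0n => Hi; apply/eholds_ebig => l.
rewrite mem_iota add0n /= => Hl; rewrite Hs !Henv //; exact: H2.
Qed.

End Forms.
Section Maps.
Variables (A B : nzRingType) (f : {rmorphism A -> B}).

Lemma map_exs n phi : eform_map f (exs n phi) = exs n (eform_map f phi).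
Proof. by elim: n => //= n ->. Qed.

Lemma map_ebig l F : eform_map f (ebig l F) = ebig l (fun i => eform_map f (F i)).
Proof. by elim: l => //= a l ->. Qed.

Lemma map_tsum l F : rterm_map f (tsum l F) = tsum l (fun i => rterm_map f (F i)).
Proof. by elim: l => //= [|a l ->]; rewrite ?rmorph0. Qed.

Lemma map_body n m a b e o :
  eform_map f (body n m a b e o) =
  body n m (fun i j k => f (a i j k)) (fun i j k => f (b i j k)) (fun l => f (e l)) (fun k => f (o k)).
Proof.
rewrite /body /= !map_ebig !map_tsum rmorph1; congr (EAnd _ (EAnd _ (EEq _ _))).
  apply: congr1; apply: functional_extensionality => i; rewrite map_ebig /=.
  by apply: congr1; apply: functional_extensionality => j /=; rewrite map_tsum.
apply: congr1; apply: functional_extensionality => i; rewrite map_ebig /=.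
by apply: congr1; apply: functional_extensionality => j /=; rewrite map_tsum.
Qed.
End Maps.
Section Main.
Variables (K L : unitRingType) (f : {rmorphism K -> L}).

Lemma adjoin_closed x : divsubring_closed (adjoin f x).
Proof.
split.
- by move=> S [].
- by move=> S [].
- by move=> a b Ha Hb S HS Hk Hx; case: (HS) => _ _ HB _ _; apply: HB; [apply: Ha | apply: Hb].
- by move=> a b Ha Hb S HS Hk Hx; case: (HS) => _ _ _ HM _; apply: HM; [apply: Ha | apply: Hb].
- by move=> a Ha S HS Hk Hx; case: (HS) => _ _ _ _ HI; apply: HI; apply: Ha.
Qed.
Lemma adjoin_f x k : adjoin f x (f k). Proof. by move=> S _ Hk _. Qed.
Lemma adjoin_x x : adjoin f x x. Proof. by move=> S _ _ Hx. Qed.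

Lemma main_indep x n (s : nat -> L) :
  is_divring L -> findim_over_center K -> ex_closed f -> center_incl f ->
  (forall i, (i < n)%N -> adjoin f x (s i)) ->
  (forall y, adjoin f x y -> exists c : nat -> K, y = \sum_(i < n) f (c i) * s i) ->
  (forall c : nat -> K, \sum_(i < n) f (c i) * s i = 0 -> forall i, (i < n)%N -> c i = 0) ->
  exists k, x = f k.
Proof.
move=> divL [es Hes] exc cinc Hmem Hspan Hind.
have [zf Hzf] := choice_fun Hes.
pose m := size es.
pose e l := es`_l.
pose z d l := (zf d)`_l.
have Hz : forall d, (forall l, central (z d l)) /\ d = \sum_(l < m) z d l * e l.
  by move=> d; have [_ [H1 H2]] := Hzf d.
case: (adjoin_closed x) => A0 A1 AB AM AI.
have [a Ha] : exists a : nat * nat -> nat -> K, forall p, (p.1 < n)%N -> (p.2 < n)%N ->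
   s p.1 * s p.2 = \sum_(k < n) f (a p k) * s k.
  apply: (@choice_fun (nat * nat) (nat -> K) (fun p c => (p.1 < n)%N -> (p.2 < n)%N ->
     s p.1 * s p.2 = \sum_(k < n) f (c k) * s k)) => -[i j] /=.
  case: (boolP ((i < n) && (j < n))%N) => [/andP [Hi Hj] | H].
    by have [c Hc] := Hspan _ (AM _ _ (Hmem _ Hi) (Hmem _ Hj)); exists c.
  by exists (fun _ => 0) => Hi Hj; rewrite Hi Hj in H.
have [b Hb] : exists b : nat * nat -> nat -> K, forall p, (p.1 < n)%N ->
   s p.1 * f (e p.2) = \sum_(k < n) f (b p k) * s k.
  apply: (@choice_fun (nat * nat) (nat -> K) (fun p c => (p.1 < n)%N ->
     s p.1 * f (e p.2) = \sum_(k < n) f (c k) * s k)) => -[i l] /=.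
  case: (boolP (i < n)%N) => [Hi | H].
    by have [c Hc] := Hspan _ (AM _ _ (Hmem _ Hi) (@adjoin_f x (e l))); exists c.
  by exists (fun _ => 0).
have [o Ho] := Hspan _ A1.
pose phi := exs n (body n m (fun i j k => a (i, j) k) (fun i l k => b (i, l) k) e o).
have : eholds (fun _ => 0 : K) phi.
  apply: exc; rewrite /phi map_exs map_body; apply/eholds_exs; exists s.
  have Henv : forall i, (i < n)%N -> (fun j => if (j < n)%N then s j else 0) i = s i.
    by move=> i Hi /=; rewrite Hi.
  apply/(eholds_body _ _ _ _ _ Henv); split.
  - by move=> i j Hi Hj; exact: (Ha (i, j)).
  - by move=> i l Hi Hl; exact: (Hb (i, l)).
  - by [].
case/eholds_exs => g H.
have Henv : forall i, (i < n)%N -> (fun j => if (j < n)%N then g j else 0) i = g i.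
  by move=> i Hi /=; rewrite Hi.
have [Ga Gb Go] := (eholds_body _ _ _ _ _ Henv).1 H.
pose E (c : nat -> K) := \sum_(i < n) f (c i) * s i.
pose P (c : nat -> K) := \sum_(i < n) c i * g i.
pose Rel u k := exists c, u = E c /\ k = P c.
have R0 : Rel 0 0.
  exists (fun _ => 0); rewrite /E /P; split; rewrite big1 // => i _; by rewrite ?rmorph0 mul0r.
have RD : forall u k v k', Rel u k -> Rel v k' -> Rel (u + v) (k + k').
  move=> u k v k' [c [-> ->]] [d [-> ->]]; exists (fun i => c i + d i).
  by rewrite /E /P -!big_split; split; apply: eq_bigr => i _; rewrite ?rmorphD mulrDl.
have RZ : forall d u k, Rel u k -> Rel (f d * u) (d * k).
  move=> d u k [c [-> ->]]; exists (fun i => d * c i).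
  by rewrite /E /P !mulr_sumr; split; apply: eq_bigr => i _; rewrite ?rmorphM mulrA.
have Rsum : forall (I : Type) (r : seq I) (Q : pred I) F1 F2,
    (forall i, Q i -> Rel (F1 i) (F2 i)) ->
    Rel (\sum_(i <- r | Q i) F1 i) (\sum_(i <- r | Q i) F2 i).
  move=> I r Q F1 F2 HF; apply: (big_ind2 Rel) => //; exact: (RD).
have RsS : forall i j, (i < n)%N -> (j < n)%N -> Rel (s i * s j) (g i * g j).
  by move=> i j Hi Hj; exists (a (i, j)); split; [exact: (Ha (i, j)) | exact: Ga].
have Rsd : forall i d, (i < n)%N -> Rel (s i * f d) (g i * d).
  move=> i d Hi; have [Hc Hd] := Hz d.
  rewrite Hd rmorph_sum !mulr_sumr; apply: (Rsum) => l _.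
  rewrite rmorphM mulrA -(cinc _ (Hc l) (s i)) -mulrA.
  rewrite (mulrA (g i)) -(Hc l (g i)) -mulrA; apply: (RZ).
  by exists (b (i, nat_of_ord l)); split; [exact: (Hb (i, nat_of_ord l)) | exact: (Gb _ _ Hi (ltn_ord l))].
have RMs : forall w k j, (j < n)%N -> Rel w k -> Rel (w * s j) (k * g j).
  move=> w k j Hj [c [-> ->]]; rewrite /E /P !mulr_suml; apply: (Rsum) => i _.
  by rewrite -!mulrA; apply: (RZ); exact: (RsS).
have RM : forall u k v k', Rel u k -> Rel v k' -> Rel (u * v) (k * k').
  move=> u k v k' [c [-> ->]] [d [-> ->]]; rewrite /E /P !mulr_suml; apply: (Rsum) => i _.
  rewrite -!mulrA; apply: (RZ).
  rewrite !mulr_sumr; apply: (Rsum) => j _; rewrite !mulrA; apply: (RMs) => //; exact: (Rsd).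
have R1 : Rel 1 1 by exists o; split; [exact Ho | exact Go].
have Rf : forall d, Rel (f d) d by move=> d; have := RZ d _ _ R1; rewrite !mulr1.
have RN : forall u k, Rel u k -> Rel (- u) (- k).
  by move=> u k Hu; have := RZ (-1) _ _ Hu; rewrite rmorphN1 !mulN1r.
have Runiq : forall u k k', Rel u k -> Rel u k' -> k = k'.
  move=> u k k' [c [-> ->]] [d [Hcd ->]].
  have H0 : \sum_(i < n) f (c i - d i) * s i = 0.
    rewrite -[RHS](subrr (E c)) {2}Hcd /E -sumrB.
    by apply: eq_bigr => i _; rewrite rmorphB mulrBl.
  apply: eq_bigr => i _; have := Hind (fun j => c j - d j) H0 i (ltn_ord i).
  by move/eqP; rewrite subr_eq0 => /eqP ->.
have [c Hc] := Hspan x (@adjoin_x x).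
have Hx : Rel x (P c) by exists c.
have Hu : Rel (x - f (P c)) 0.
  by have := RD _ _ _ _ Hx (RN _ _ (Rf (P c))); rewrite subrr.
case: (eqVneq (x - f (P c)) 0) => [/eqP|nz].
  by rewrite subr_eq0 => /eqP ->; exists (P c).
have Uu := divL _ nz.
have Au : adjoin f x (x - f (P c)) := AB _ _ (@adjoin_x x) (@adjoin_f x _).
have [d Hd] := Hspan _ (AI _ Au).
have Hv : Rel (x - f (P c))^-1 (P d) by exists d.
have := RM _ _ _ _ Hu Hv; rewrite mulrV // mul0r => H10.
by have := Runiq _ _ _ R1 H10 => /eqP; rewrite oner_eq0.
Qed.
End Main.
Section Reduce.
Variables (K L : unitRingType) (f : {rmorphism K -> L}).

Lemma drop_one (x : L) n (s : nat -> L) (c : nat -> K) i :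
  is_divring K ->
  (i < n.+1)%N -> c i != 0 ->
  \sum_(k < n.+1) f (c k) * s k = 0 ->
  (forall y, adjoin f x y -> exists d : nat -> K, y = \sum_(k < n.+1) f (d k) * s k) ->
  (forall y, adjoin f x y -> exists d : nat -> K, y = \sum_(k < n) f (d k) * s (bump i k)).
Proof.
move=> divK Hi Hci H0 Hspan y Hy.
have [d Hd] := Hspan y Hy.
pose j : 'I_n.+1 := Ordinal Hi.
pose lam := (c i)^-1.
have Ui := divK _ Hci.
have Hsj : s i = - \sum_(k < n) f (lam * c (bump i k)) * s (bump i k).
  move: H0; rewrite (bigD1_ord j) //= => /eqP; rewrite addr_eq0 => /eqP H0.
  have -> : s i = f lam * (f (c i) * s i) by rewrite mulrA -rmorphM mulVr // rmorph1 mul1r.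
  rewrite H0 mulrN mulr_sumr; congr (- _); apply: eq_bigr => k _.
  by rewrite rmorphM mulrA.
exists (fun k => d (bump i k) - d i * (lam * c (bump i k))).
rewrite Hd (bigD1_ord j) //= Hsj mulrN mulr_sumr.
rewrite addrC -sumrB; apply: eq_bigr => k _.
by rewrite rmorphB mulrBl (rmorphM f (d i)) mulrA.
Qed.

Lemma reduce (x : L) :
  is_divring K -> is_divring L -> findim_over_center K -> ex_closed f -> center_incl f ->
  forall N n (s : nat -> L), (n <= N)%N ->
  (forall i, (i < n)%N -> adjoin f x (s i)) ->
  (forall y, adjoin f x y -> exists c : nat -> K, y = \sum_(i < n) f (c i) * s i) ->
  exists k, x = f k.
Proof.
move=> divK divL fin exc cinc N.
elim: N => [|N IH] n s HnN Hmem Hspan.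
  apply: (main_indep divL fin exc cinc Hmem Hspan).
  by move=> c _ i Hi; move: (leq_trans Hi HnN).
case: (classic (forall c : nat -> K, \sum_(i < n) f (c i) * s i = 0 ->
                  forall i, (i < n)%N -> c i = 0)) => [Hind | Hdep].
  exact: (main_indep divL fin exc cinc Hmem Hspan).
have [c [H0 [i [Hi Hci]]]] : exists c : nat -> K, \sum_(i < n) f (c i) * s i = 0 /\
    exists i, (i < n)%N /\ c i <> 0.
  apply: NNPP => Hn; apply: Hdep => c H0 i Hi; apply: NNPP => Hc.
  by apply: Hn; exists c; split => //; exists i.
clear Hdep; case: n HnN Hmem Hspan H0 Hi => [|n] HnN Hmem Hspan H0 Hi; first by [].
apply: (IH n (fun k => s (bump i k))) => //.
  move=> k Hk; apply: Hmem; rewrite /bump; case: (i <= k)%N; by rewrite ?add1n ?add0n ?ltnS // ltnW.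
apply: (drop_one divK Hi _ H0 Hspan); exact/eqP.
Qed.
End Reduce.

Theorem theorem2 (K L : unitRingType) (f : {rmorphism K -> L}) :
  is_divring K -> is_divring L ->
  findim_over_center K ->
  ex_closed f -> center_incl f ->
  regular_ext f.
Proof.
move=> divK divL fin exc cinc x [[s [Hmem Hspan]] _].
apply: (reduce divK divL fin exc cinc (N := size s) (n := size s) (s := fun i => s`_i)) => //.
move=> y Hy; have [c [_ Hc]] := Hspan y Hy.
by exists (fun i => c`_i).
Qed.
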